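(* Let $R$ be a domain and let $G$ be a finite undirected graph without loops with vertex set $A=\{a_1,\dots,a_n\}$, $n\geqslant 2$, such that the complement graph $\overline{G}$ is connected. Let $L(A;G)$ be one of $\mathcal{L}(A;G)$, $\mathcal{M}(A;G)$, $\mathcal{N}_m(A;G)$ ($m\geqslant 2$), and suppose $L(A;G)=L_1\oplus L_2$ is a direct sum of two subalgebras such that for every $i\in\{1,\dots,n\}$ we have $(a_i)_1=a_i+g_i$ and $(a_i)_2=-g_i$ with $g_i\in L(A;G)$ and $a_i\notin\mathrm{supp}(\omega_1(g_i))$. Then $\omega_1(g_i)=0$ for all $i$.
   Context: All Lie algebras are over the domain $R$. The complement graph $\overline{G}$ has vertex set $A$, with distinct vertices adjacent iff they are not adjacent in $G$. The partially commutative Lie algebra in a variety $\mathfrak{M}$ with defining graph $G$ is the Lie algebra presented in $\mathfrak{M}$ by generators $A$ and relations $[a_p,a_q]=0$ for all edges $\{a_p,a_q\}$ of $G$. $\mathcal{L}(A;G)$: $\mathfrak{M}$ = all Lie algebras; $\mathcal{M}(A;G)$: metabelian Lie algebras ($[[x,y],[z,t]]=0$); $\mathcal{N}_m(A;G)$: nilpotent Lie algebras of degree $m$ (all Lie products of $m+1$ elements vanish). Since all relations and identities are multi-homogeneous, every element $h$ is uniquely a sum of nonzero multi-homogeneous components (multi-degree of a Lie monomial = vector counting occurrences of each $a_p$). $\mathrm{supp}(h)$ is the set of $a_p$ occurring with nonzero exponent in the multi-degree of some component of $h$; $\omega_1(h)$ is the sum of the components of length $1$. A direct sum $L=L_1\oplus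 L_2$ of subalgebras means $L_1,L_2$ are subalgebras, $L=L_1\oplus L_2$ as $R$-modules and $[L_1,L_2]=0$; for $h\in L$, $(h)_1\in L_1$, $(h)_2\in L_2$ are the unique elements with $h=(h)_1+(h)_2$. *)

(* Defs.v *)
From HB Require Import structures.
From mathcomp Require Import all_boot all_algebra.
Set Implicit Arguments. Unset Strict Implicit. Unset Printing Implicit Defensive.
Import GRing.Theory.
Local Open Scope ring_scope.

Inductive variety := AllLie | Metabelian | Nilpotent of nat.

Definition admissible_variety (V : variety) : Prop :=
  match V with Nilpotent m => (2 <= m)%N | _ => True end.

Section PCLie.
Variable R : idomainType.
Variable n : nat.

(* Formal terms over generators a_0..a_{n-1} (= 'I_n). *)
Inductive lterm : Type :=
| LGen of 'I_n
| LZero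
| LAdd of lterm & lterm
| LScale of R & lterm
| LBr of lterm & lterm.

Inductive lie_product : nat -> lterm -> Prop :=
| lp_one x : lie_product 1 x
| lp_br k l x y : lie_product k x -> lie_product l y ->
    lie_product (k + l) (LBr x y).

(* The congruence presenting L(A;G) in the variety V: R-module axioms,
   bilinearity, alternativity, Jacobi, the identities of V, and the
   defining relations [a_p,a_q] = 0 for edges {a_p,a_q} of G (given by e).
   Elements of L(A;G) are terms modulo lequiv. *)
Inductive lequiv (e : rel 'I_n) (V : variety) : lterm -> lterm -> Prop :=
| le_refl x : lequiv e V x x
| le_sym x y : lequiv e V x y -> lequiv e V y x
| le_trans x y z : lequiv e V x y -> lequiv e V y z -> lequiv e V x z
| le_add x x' y y' : lequiv e V x x' -> lequiv e V y y' ->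
    lequiv e V (LAdd x y) (LAdd x' y')
| le_scale c x x' : lequiv e V x x' -> lequiv e V (LScale c x) (LScale c x')
| le_br x x' y y' : lequiv e V x x' -> lequiv e V y y' ->
    lequiv e V (LBr x y) (LBr x' y')
| le_addA x y z : lequiv e V (LAdd x (LAdd y z)) (LAdd (LAdd x y) z)
| le_addC x y : lequiv e V (LAdd x y) (LAdd y x)
| le_add0 x : lequiv e V (LAdd LZero x) x
| le_addN x : lequiv e V (LAdd x (LScale (-1) x)) LZero
| le_scale1 x : lequiv e V (LScale 1 x) x
| le_scaleA c d x : lequiv e V (LScale c (LScale d x)) (LScale (c * d) x)
| le_scaleDr c x y :
    lequiv e V (LScale c (LAdd x y)) (LAdd (LScale c x) (LScale c y))
| le_scaleDl c d x :
    lequiv e V (LScale (c + d) x) (LAdd (LScale c x) (LScale d x))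
| le_brDl x y z : lequiv e V (LBr (LAdd x y) z) (LAdd (LBr x z) (LBr y z))
| le_brDr x y z : lequiv e V (LBr x (LAdd y z)) (LAdd (LBr x y) (LBr x z))
| le_brZl c x y : lequiv e V (LBr (LScale c x) y) (LScale c (LBr x y))
| le_brZr c x y : lequiv e V (LBr x (LScale c y)) (LScale c (LBr x y))
| le_alt x : lequiv e V (LBr x x) LZero
| le_jacobi x y z :
    lequiv e V (LAdd (LAdd (LBr (LBr x y) z) (LBr (LBr y z) x)) (LBr (LBr z x) y))
      LZero
| le_metab x y z t : V = Metabelian ->
    lequiv e V (LBr (LBr x y) (LBr z t)) LZero
| le_nilp m t : V = Nilpotent m -> lie_product m.+1 t -> lequiv e V t LZero
| le_rel p q : e p q -> lequiv e V (LBr (LGen p) (LGen q)) LZero.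

Inductive lmono : Type := MLeaf of 'I_n | MNode of lmono & lmono.

Fixpoint mono_term (m : lmono) : lterm :=
  match m with MLeaf i => LGen i | MNode a b => LBr (mono_term a) (mono_term b) end.

Fixpoint mdeg (m : lmono) (p : 'I_n) : nat :=
  match m with MLeaf i => (i == p : nat) | MNode a b => (mdeg a p + mdeg b p)%N end.

Fixpoint mlen (m : lmono) : nat :=
  match m with MLeaf _ => 1%N | MNode a b => (mlen a + mlen b)%N end.

Fixpoint expand (t : lterm) : seq (R * lmono) :=
  match t with
  | LGen i => [:: (1, MLeaf i)]
  | LZero => [::]
  | LAdd x y => expand x ++ expand y
  | LScale c x => [seq (c * u.1, u.2) | u <- expand x]
  | LBr x y => [seq (u.1 * v.1, MNode u.2 v.2) | u <- expand x, v <- expand y]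
  end.

Definition lsum (s : seq lterm) : lterm := foldr LAdd LZero s.

Definition component (d : 'I_n -> nat) (t : lterm) : lterm :=
  lsum [seq LScale u.1 (mono_term u.2) |
        u <- expand t & [forall p, mdeg u.2 p == d p]].

Definition omega1 (t : lterm) : lterm :=
  lsum [seq LScale u.1 (mono_term u.2) | u <- expand t & mlen u.2 == 1%N].

Definition in_supp (e : rel 'I_n) (V : variety) (p : 'I_n) (t : lterm) : Prop :=
  exists d : 'I_n -> nat, (0 < d p)%N /\ ~ lequiv e V (component d t) LZero.

(* Subalgebra of L(A;G): a set of terms saturated for lequiv, closed under
   the operations. *)
Definition subalgebra (e : rel 'I_n) (V : variety) (S : lterm -> Prop) : Prop :=
  [/\ (forall x y, lequiv e V x y -> S x -> S y),
      S LZero,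
      (forall x y, S x -> S y -> S (LAdd x y)),
      (forall c x, S x -> S (LScale c x)) &
      (forall x y, S x -> S y -> S (LBr x y))].

Definition direct_sum (e : rel 'I_n) (V : variety) (L1 L2 : lterm -> Prop) : Prop :=
  [/\ subalgebra e V L1, subalgebra e V L2,
      (forall t, exists t1 t2, [/\ L1 t1, L2 t2 & lequiv e V t (LAdd t1 t2)]),
      (forall t, L1 t -> L2 t -> lequiv e V t LZero) &
      (forall x y, L1 x -> L2 y -> lequiv e V (LBr x y) LZero)].

End PCLie.

Definition complement_connected (n : nat) (e : rel 'I_n) : Prop :=
  forall x y : 'I_n, connect (fun u v => (u != v) && ~~ e u v) x y.

(* Main.v *)
Require Import Defs.
From mathcomp Require Import all_boot all_algebra.
From mathcomp Require Import ring zify.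
Import GRing.Theory.
Local Open Scope ring_scope.
Set Implicit Arguments. Unset Strict Implicit.

Section Ev.
Variable R : idomainType.
Variable n : nat.
Variable e : rel 'I_n.
Variable V : variety.

Fixpoint ev1 (t : lterm R n) (p : 'I_n) : R :=
  match t with
  | LGen i => (i == p)%:R
  | LZero => 0
  | LAdd x y => ev1 x p + ev1 y p
  | LScale c x => c * ev1 x p
  | LBr _ _ => 0
  end.

Fixpoint ev2 (t : lterm R n) (p q : 'I_n) : R :=
  match t with
  | LGen _ => 0
  | LZero => 0
  | LAdd x y => ev2 x p q + ev2 y p q
  | LScale c x => c * ev2 x p q
  | LBr x y => if e p q then 0 else ev1 x p * ev1 y q - ev1 x q * ev1 y p
  end.

Lemma lp_pos k (t : lterm R n) : lie_product k t -> (1 <= k)%N.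
Proof. by elim=> // k1 l x y _ H1 _ H2; rewrite (leq_trans H1) // leq_addr. Qed.

Lemma lp2 k (t : lterm R n) : lie_product k t -> (2 <= k)%N -> forall p, ev1 t p = 0.
Proof. by case=> //. Qed.

Lemma lp3 k (t : lterm R n) : lie_product k t -> (3 <= k)%N -> forall p q, ev2 t p q = 0.
Proof.
case=> // k1 l x y Hx Hy Hk p q /=.
case: (e p q) => //.
have h1 := lp_pos Hx; have h2 := lp_pos Hy.
case: (leqP 2 k1) => H.
  by rewrite !(lp2 Hx H); ring.
have H' : (2 <= l)%N by move: Hk H h1 h2; clear; lia.
by rewrite !(lp2 Hy H'); ring.
Qed.

Hypothesis esym : symmetric e.
Hypothesis Vadm : admissible_variety V.

Lemma sound x y : lequiv e V x y ->
  (forall p, ev1 x p = ev1 y p) /\ (forall p q, ev2 x p q = ev2 y p q).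
Proof.
elim=> {x y} /=.
- by move=> x; split.
- by move=> x y _ [H1 H2]; split=> *; rewrite ?H1 ?H2.
- by move=> x y z _ [H1 H2] _ [H3 H4]; split=> *; rewrite ?H1 ?H2 ?H3 ?H4.
- by move=> x x' y y' _ [H1 H2] _ [H3 H4]; split=> *; rewrite ?H1 ?H2 ?H3 ?H4.
- by move=> c x x' _ [H1 H2]; split=> *; rewrite ?H1 ?H2.
- by move=> x x' y y' _ [H1 H2] _ [H3 H4]; split=> *; rewrite ?H1 ?H2 ?H3 ?H4.
all: try (intros; split=> p; intros; simpl; repeat case: ifP => _; ring).
- move=> m t HV Hl.
  have hm : (2 <= m)%N by move: Vadm; rewrite HV.
  split=> p; first by rewrite (lp2 Hl) //; apply: leqW.
  by move=> q; rewrite (lp3 Hl).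
- move=> p q Hpq; split=> // p' q'.
  case E: (e p' q') => //.
  have : ~~ ((p == p') && (q == q')).
    by apply/negP => /andP [/eqP a /eqP b]; subst; rewrite Hpq in E.
  have : ~~ ((p == q') && (q == p')).
    by apply/negP => /andP [/eqP a /eqP b]; subst; rewrite esym Hpq in E.
  by case: (p == p'); case: (q == q'); case: (p == q'); case: (q == p') => //= _ _; ring.
Qed.
End Ev.

Section Part2.
Variable R : idomainType.
Variable n : nat.
Variable e : rel 'I_n.
Variable V : variety.

Lemma ev1_expand (t : lterm R n) p :
  ev1 t p = \sum_(u <- expand t) u.1 * ev1 (mono_term R u.2) p.
Proof.
elim: t => [i||x IHx y IHy|c x IHx|x _ y _] /=.
- by rewrite big_seq1 /= mul1r.
- by rewrite big_nil.
- by rewrite big_cat /= IHx IHy.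
- rewrite big_map IHx big_distrr /=; apply: eq_bigr => u _; by rewrite mulrA.
- rewrite big_allpairs_dep big1 // => u _; rewrite big1 // => v _.
  by rewrite /= mulr0.
Qed.

Lemma ev1_lsum (s : seq (lterm R n)) p : ev1 (lsum s) p = \sum_(x <- s) ev1 x p.
Proof. by elim: s => [|x s IH]; rewrite ?big_nil ?big_cons //= IH. Qed.

Lemma ev1_omega1 (t : lterm R n) p : ev1 (omega1 t) p = ev1 t p.
Proof.
rewrite /omega1 ev1_lsum big_map big_filter [RHS]ev1_expand big_mkcond /=.
apply: eq_bigr => -[c [j|a b]] _ //=.
by rewrite mulr0; case: ifP.
Qed.

Lemma ev1_component (t : lterm R n) j :
  ev1 (component (mdeg (MLeaf j)) t) j = ev1 t j.
Proof.
rewrite /component ev1_lsum big_map big_filter [RHS]ev1_expand big_mkcond /=.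
apply: eq_bigr => -[c [k|a b]] _ /=; last by rewrite mulr0; case: ifP.
case: (eqVneq k j) => [->|nkj]; last by rewrite mulr0; case: ifP.
by have -> : [forall p, ((j == p) : nat) == (j == p)] = true by apply/forallP.
Qed.

Notation leqv := (lequiv e V).
Notation Z := (LZero R n).

Lemma scale0 (x : lterm R n) : leqv (LScale 0 x) Z.
Proof.
set Y := LScale 0 x.
have h1 : leqv (LScale (0 + 0) x) (LAdd Y Y) by apply: le_scaleDl.
rewrite addr0 in h1.
set N := LScale (-1) Y.
apply: le_sym.
apply: le_trans (le_sym (le_addN e V Y)) _.
apply: le_trans (le_add h1 (le_refl e V N)) _.
apply: le_trans (le_sym (le_addA e V Y Y N)) _.
apply: le_trans (le_add (le_refl e V Y) (le_addN e V Y)) _.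
apply: le_trans (le_addC e V Y Z) _.
exact: le_add0.
Qed.

Lemma addr0_eq (x : lterm R n) : leqv (LAdd x Z) x.
Proof. exact: le_trans (le_addC e V x Z) (le_add0 e V x). Qed.

Lemma lsum0 (s : seq (lterm R n)) : (forall x, List.In x s -> leqv x Z) -> leqv (lsum s) Z.
Proof.
elim: s => [|x s IH] H /=; first exact: le_refl.
apply: le_trans (le_add (H x (or_introl erefl)) (IH (fun y hy => H y (or_intror hy)))) _.
exact: le_add0.
Qed.
Definition gsum (f : 'I_n -> R) (r : seq 'I_n) :=
  lsum [seq LScale (f k) (LGen R k) | k <- r].

Lemma absorb (r : seq 'I_n) c j f : uniq r -> j \in r ->
  leqv (LAdd (LScale c (LGen R j)) (gsum f r))
       (gsum (fun k => f k + (if k == j then c else 0)) r).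
Proof.
elim: r => [|k r IH] //= /andP [kr ur]; rewrite in_cons => /orP [/eqP ->|jr]; rewrite /gsum /=.
- rewrite eqxx.
  have -> : [seq LScale (f k0 + (if k0 == k then c else 0)) (LGen R k0) | k0 <- r]
          = [seq LScale (f k0) (LGen R k0) | k0 <- r].
    apply/eq_in_map => k0 hk0; rewrite ifN ?addr0 //.
    by apply: contraNneq kr => <-.
  apply: le_trans (le_addA _ _ _ _ _) _; apply: le_add; last exact: le_refl.
  apply: le_trans (le_addC _ _ _ _) _; exact: le_sym (le_scaleDl _ _ _ _ _).
- have kj : k != j by apply: contraNneq kr => ->.
  rewrite ifN // addr0.
  apply: le_trans (le_addA _ _ _ _ _) _.
  apply: le_trans (le_add (le_addC _ _ _ _) (le_refl _ _ _)) _.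
  apply: le_trans (le_sym (le_addA _ _ _ _ _)) _.
  apply: le_add; first exact: le_refl.
  exact: IH.
Qed.

Definition cf (s : seq (R * lmono n)) k := \sum_(u <- s) u.1 * ev1 (mono_term R u.2) k.

Lemma norm (s : seq (R * lmono n)) :
  (forall u, List.In u s -> exists j, u.2 = MLeaf j) ->
  leqv (lsum [seq LScale u.1 (mono_term R u.2) | u <- s]) (gsum (cf s) (enum 'I_n)).
Proof.
elim: s => [|[c m] s IH] H /=.
- apply: le_sym; apply: lsum0 => x /List.in_map_iff [k [<- _]].
  rewrite /cf big_nil; exact: scale0.
- have [j hm] := H _ (or_introl erefl); simpl in hm; subst m; simpl mono_term.
  apply: le_trans (le_add (le_refl _ _ _) (IH (fun u hu => H u (or_intror hu)))) _.
  have hj : j \in enum 'I_n by rewrite mem_enum.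
  apply: le_trans (absorb c (cf s) (enum_uniq _) hj) _.
  rewrite /gsum.
  have -> : [seq LScale (cf s k + (if k == j then c else 0)) (LGen R k) | k <- enum 'I_n]
          = [seq LScale (cf ((c, MLeaf j) :: s) k) (LGen R k) | k <- enum 'I_n].
    apply: eq_map => k; congr LScale; rewrite /cf big_cons /=.
    case: (eqVneq k j) => [->|kj]; first by rewrite /= mulr1 addrC.
    by rewrite /= mulr0 addr0 add0r.
  exact: le_refl.
Qed.
End Part2.

Lemma mlen_pos n (m : lmono n) : (1 <= mlen m)%N.
Proof. by elim: m => //= a Ha b Hb; rewrite (leq_trans Ha) // leq_addr. Qed.

Lemma In_filter T (P : pred T) (s : seq T) u : List.In u (filter P s) -> P u.
Proof.
elim: s => //= x s IH; case: ifP => hx /=; last exact: IH.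
by case=> [<-|h] //; apply: IH.
Qed.

Unset Implicit Arguments.
Theorem lemma3 (R : idomainType) (n : nat) (e : rel 'I_n) (V : variety)
    (L1 L2 : lterm R n -> Prop) (g : 'I_n -> lterm R n) :
  (2 <= n)%N -> symmetric e -> irreflexive e -> complement_connected e ->
  admissible_variety V ->
  direct_sum e V L1 L2 ->
  (forall i, L1 (LAdd (LGen R i) (g i)) /\ L2 (LScale (-1) (g i))) ->
  (forall i, ~ in_supp e V i (omega1 (g i))) ->
  forall i, lequiv e V (omega1 (g i)) (LZero R n).
Proof.
move=> n2 esym eirr cc adm [s1 s2 dec inter br] hg hsupp.
have Gdiag : forall j, ev1 (g j) j = 0.
  move=> j; apply/eqP; apply/negPn/negP => Hne; apply: (hsupp j).
  exists (mdeg (MLeaf j)); split; first by rewrite /= eqxx.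
  move=> H; have [H1 _] := sound esym adm H.
  by move: (H1 j); rewrite ev1_component ev1_omega1 /= => h0; rewrite h0 eqxx in Hne.
have comm : forall a b p q,
    ev2 e (LBr (LAdd (LGen R a) (g a)) (LScale (-1) (g b))) p q = 0.
  move=> a b p q; have [_ H2] := sound esym adm (br _ _ (hg a).1 (hg b).2).
  exact: H2 p q.
have nb : forall q, exists z, (q != z) && ~~ e q z.
  move=> q.
  have [y hy] : exists y : 'I_n, y != q.
    have h0 : (0 < n)%N by apply: leq_trans n2.
    have h1 : (1 < n)%N by [].
    case: (eqVneq q (Ordinal h0)) => [->|hq]; first by exists (Ordinal h1).
    by exists (Ordinal h0); rewrite eq_sym.
  move: (cc q y) => /connectP [pth].
  case: pth => [|z pth] /=; first by move=> _ eq; rewrite eq eqxx in hy.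
  by move=> /andP [hz _] _; exists z.
have G0 : forall b q, ev1 (g b) q = 0.
  move=> b q; have [z /andP [qz nez]] := nb q.
  have c1 := comm z z q z; have c2 := comm z b q z.
  rewrite /= (negbTE nez) Gdiag eqxx in c1 c2.
  rewrite eq_sym in qz; rewrite (negbTE qz) in c1 c2.
  have hzq : ev1 (g z) q = 0.
    rewrite -c1 /=; ring.
  rewrite hzq in c2.
  rewrite -c2 /=; ring.
move=> i.
rewrite /omega1.
apply: le_trans (norm e V _) _.
  move=> [c m] hu; have /= hm := In_filter hu.
  case: m hm {hu} => [j|a b] /= hm; first by exists j.
  have ha := mlen_pos a; have hb := mlen_pos b; exfalso; move/eqP: hm; lia.
apply: lsum0 => x /List.in_map_iff [k [<- _]].
have -> : cf [seq u <- expand (g i) | mlen u.2 == 1%N] k = 0.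
  have := ev1_omega1 (g i) k; rewrite G0 /omega1 ev1_lsum big_map => <-.
  by apply: eq_bigr.
exact: scale0.
Qed.
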